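(* Let $0<p<1$, $q=1-p$, $N\ge1$, let $\sigma=(\sigma_1,\dots,\sigma_N)\in S_N$, let $\mathbf{x}=(x_1,\dots,x_N)$ and $\mathbf{y}=(y_1,\dots,y_N)$ be integer vectors with $x_1>x_2>\dots>x_N$ and $y_1>y_2>\dots>y_N$, let $t\in\mathbb{Z}$, and let $$\mathcal{F}_\sigma=\prod_{i=1}^N F_{\sigma_i-i}(x_i-y_{\sigma_i},t).$$ (1) If $t=0$, then $\mathcal{F}_\sigma=0$ unless $\sigma$ is the identity permutation and $\mathbf{x}=\mathbf{y}$. (2) Let $t=1$ and let $(i_1,\dots,i_k)$ be a cycle of $\sigma$ with $k>1$ elements, i.e. $\sigma_{i_1}=i_2,\sigma_{i_2}=i_3,\dots,\sigma_{i_k}=i_1$. Then $\mathcal{F}_\sigma=0$ unless, up to a cyclic shift of the indices of the cycle, $i_2=i_1+1,\dots,i_k=i_1+k-1$ and $y_{i_1}=x_{i_1}$, $x_{i_2}=y_{i_2}=x_{i_1}-1,\dots,x_{i_k}=y_{i_k}=x_{i_1}-k+1$.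
   Context: For $n,x\in\mathbb{Z}$: $F_n(x,t)=\frac{1}{2\pi i}\oint_{\Gamma_0}\frac{dw}{w}\left(q+\frac{p}{w}\right)^t(1-w)^{-n}w^x$ for $t\ge0$, and $F_n(x,t)=0$ for $t<0$, where $\Gamma_0$ is a positively oriented contour encircling the origin and leaving $w=1$ outside. *)

(* Defs.v *)
From HB Require Import structures.
From mathcomp Require Import all_boot all_order all_algebra all_fingroup.
Set Implicit Arguments. Unset Strict Implicit. Unset Printing Implicit Defensive.
Import Order.TTheory GRing.Theory Num.Theory.
Local Open Scope ring_scope.

(* Coefficient of w^m in the power series expansion at w = 0 of (1-w)^(-n),
   n an arbitrary integer: the generalized binomial
   (-1)^m binom(-n, m) = n (n+1) ... (n+m-1) / m!, and 0 for m < 0. *)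
Definition invpow_coef (R : fieldType) (n m : int) : R :=
  match m with
  | Posz m => (\prod_(i < m) (n + (i : nat)%:Z)%:~R) / (m`!)%:R
  | Negz _ => 0
  end.

(* F_n(x,t) = (1/2 pi i) \oint_{Gamma_0} dw/w (q + p/w)^t (1-w)^(-n) w^x,
   Gamma_0 around 0 leaving 1 outside, q = 1 - p; F_n(x,t) = 0 for t < 0.
   The contour integral is the residue at 0, i.e. the coefficient of w^(-x)
   in the Laurent expansion of (q + p/w)^t (1-w)^(-n) at 0:
   sum_{j=0}^t C(t,j) q^(t-j) p^j [w^(j-x)] (1-w)^(-n). *)
Definition F (R : fieldType) (p : R) (n x t : int) : R :=
  match t with
  | Posz t => \sum_(j < t.+1)
       ('C(t, j))%:R * (1 - p) ^+ (t - j) * p ^+ j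
         * invpow_coef R n ((j : nat)%:Z - x)
  | Negz _ => 0
  end.

(* The product  F_sigma = prod_{i=1}^N F_{sigma_i - i}(x_i - y_{sigma_i}, t),
   indices shifted to 0..N-1 (differences sigma_i - i are unchanged). *)
Definition Fsigma (R : fieldType) (p : R) (N : nat) (s : 'S_N)
  (x y : 'I_N -> int) (t : int) : R :=
  \prod_(i < N) F p ((s i : nat)%:Z - (i : nat)%:Z) (x i - y (s i)) t.

(* Main.v *)
Require Import Defs.
From HB Require Import structures.
From mathcomp Require Import all_boot all_order all_algebra all_fingroup.
Import Order.TTheory GRing.Theory Num.Theory.
From mathcomp Require Import zify.
Local Open Scope ring_scope.

Lemma coef_nz (R : fieldType) (n m : int) :
  invpow_coef R n m != 0 -> 0 <= m /\ (0 < n \/ m <= - n).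
Proof.
case: m => [m|m] /=; last by rewrite eqxx.
move=> H; split; first by [].
case: (boolP (0 < n)) => hn; [by left|right].
rewrite leNgt; apply/negP => hlt.
have hi : (absz n < m)%N by lia.
move: H; rewrite (bigD1 (Ordinal hi)) //= .
have -> : n + (absz n)%:Z = 0 by lia.
by rewrite mul0r mul0r eqxx.
Qed.

Lemma F0_nz (R : fieldType) (p : R) n z : F p n z 0 != 0 -> z <= 0 /\ (0 < n \/ n <= z).
Proof.
rewrite /F /= big_ord_recl big_ord0 /= addr0 bin0 subnn !expr0 !mulr1 mul1r add0r.
move/coef_nz => [h1 [h2|h2]]; lia.
Qed.

Lemma F1_nz (R : fieldType) (p : R) n z : F p n z 1 != 0 -> z <= 1 /\ (0 < n \/ n <= z).
Proof.
rewrite /F /= !big_ord_recl big_ord0 /= addr0.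
case: (eqVneq (invpow_coef R n (0%:Z - z)) 0) => [e0|/coef_nz]; last first.
  move=> [h1 [h2|h2]]; lia.
rewrite e0 mulr0 add0r.
move=> H. have : invpow_coef R n ((bump 0 0)%:Z - z) != 0.
  by apply: contraNneq H => ->; rewrite mulr0.
move/coef_nz => [h1 [h2|h2]]; rewrite /bump /= in h1 h2; lia.
Qed.

Lemma mono N (x : 'I_N -> int) (hx : forall i j : 'I_N, (i < j)%N -> x j < x i) :
  forall i j : 'I_N, (i <= j)%N -> x j + ((j:nat)%:Z - (i:nat)%:Z) <= x i.
Proof.
move=> i j; move: {2}(j - i)%N (erefl (j - i)%N) => d.
elim: d j => [|d IH] j hd hij.
  have -> : j = i by apply: val_inj => /=; move: hd hij; rewrite /=; idtac; lia.
  lia.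
have hj' : (j - 1 < N)%N by have := ltn_ord j; lia.
have e1 : ((j - 1) - i)%N = d by lia.
have e2 : (i <= j - 1)%N by lia.
have := IH (Ordinal hj') e1 e2.
have e3 : (Ordinal hj' < j)%N by rewrite /=; lia.
have := hx (Ordinal hj') j e3.
rewrite /=; lia.
Qed.
Arguments mono {N x} hx.

Lemma part1 N (s : 'S_N) (x y : 'I_N -> int)
  (hx : forall i j : 'I_N, (i < j)%N -> x j < x i)
  (hy : forall i j : 'I_N, (i < j)%N -> y j < y i)
  (H : forall i, x i - y (s i) <= 0 /\ (0 < (s i : nat)%:Z - (i:nat)%:Z \/
          (s i:nat)%:Z - (i:nat)%:Z <= x i - y (s i))) :
  s = 1%g /\ forall i, x i = y i.
Proof.
have fixs : forall n (i : 'I_N), (i < n)%N -> s i = i.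
  elim=> [//|n IH] i hi.
  case: (ltnP i n) => [/IH//|hin].
  case: (ltngtP (s i) i) => [hlt|hgt|/val_inj//].
    have hsn : (s i < n)%N by lia.
    have /perm_inj e := IH (s i) hsn.
    by move: hlt; rewrite e ltnn.
  exfalso.
  set q := (s^-1)%g i.
  have sq : s q = i by rewrite permKV.
  case: (ltngtP q i) => [hq|hq|/val_inj hq].
  - have hqn : (q < n)%N by lia.
    have := IH q hqn; rewrite sq => e.
    by move: hq; rewrite -e ltnn.
  - have h1 := H q; rewrite sq in h1.
    have h2 := H i.
    have m1 := mono hx i q (ltnW hq).
    have m2 := mono hy i (s i) (ltnW hgt).
    lia.
  - by move: hgt; rewrite -{2}hq sq ltnn.
split.
  by apply/permP => i; rewrite perm1; exact: fixs (ltn_ord i).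
by move=> i; have := H i; rewrite (fixs N i (ltn_ord i)); lia.
Qed.

Lemma part2 N (s : 'S_N) (x y : 'I_N -> int)
  (hx : forall i j : 'I_N, (i < j)%N -> x j < x i)
  (hy : forall i j : 'I_N, (i < j)%N -> y j < y i)
  (H : forall i, x i - y (s i) <= 1 /\ (0 < (s i : nat)%:Z - (i:nat)%:Z \/
          (s i:nat)%:Z - (i:nat)%:Z <= x i - y (s i)))
  (k : nat) (c : nat -> 'I_N) (hk : (1 < k)%N)
  (hinj : forall j1 j2, (j1 < k)%N -> (j2 < k)%N -> c j1 = c j2 -> j1 = j2)
  (hcyc : forall j, (j < k)%N -> s (c j) = c ((j + 1) %% k)%N) :
     exists r : nat, (r < k)%N /\
       let d := fun j : nat => c ((j + r) %% k)%N in
       (forall j, (j < k)%N -> (d j : nat) = (d 0%N : nat) + j)%N /\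
       y (d 0%N) = x (d 0%N) /\
       (forall j, (0 < j)%N -> (j < k)%N ->
          x (d j) = x (d 0%N) - (j : nat)%:Z /\
          y (d j) = x (d 0%N) - (j : nat)%:Z).
Proof.
have k0 : (0 < k)%N by lia.
have : exists n, [exists j : 'I_k, (c j : nat) == n].
  by exists (c 0%N : nat); apply/existsP; exists (Ordinal k0).
case/ex_minnP => m /existsP [r /eqP hcr] hmin.
exists r; split => //.
pose d := fun j : nat => c ((j + r) %% k)%N.
have hd0 : (d 0%N : nat) = m by rewrite /d add0n modn_small // hcr.
have hdmin : forall j, (j < k)%N -> (m <= d j)%N.
  move=> j _; apply: hmin; apply/existsP.
  by exists (Ordinal (ltn_pmod (j + r) k0)).
have hdinj : forall a b, (a < k)%N -> (b < k)%N -> d a = d b -> a = b.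
  move=> a b ha hb e.
  have := hinj _ _ (ltn_pmod (a + r) k0) (ltn_pmod (b + r) k0) e.
  by move/eqP; rewrite eqn_modDr !modn_small // => /eqP.
have hds : forall j, (j + 1 < k)%N -> s (d j) = d (j + 1)%N.
  move=> j hj; rewrite /d hcyc ?ltn_pmod //.
  by rewrite modnDml addnAC.
have hdsl : s (d (k - 1)%N) = d 0%N.
  rewrite /d hcyc ?ltn_pmod // modnDml add0n.
  have -> : (k - 1 + r + 1 = r + k)%N by lia.
  by rewrite modnDr.
have key : forall a, (a < k)%N -> forall b, (b <= a)%N -> (d b : nat) = (m + b)%N.
  elim=> [_ b|a IH ha b hb].
    by rewrite leqn0 => /eqP ->; rewrite hd0 addn0.
  case: (leqP b a) => [hba|hab].
    have ha' : (a < k)%N by lia.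
    exact: IH ha' b hba.
  have eb : b = (a + 1)%N by lia.
  subst b.
  have ha' : (a < k)%N by lia.
  have IH' := IH ha'.
  have fresh : forall j, (j < k)%N -> (a < j)%N -> (m + a < d j)%N.
    move=> j hj haj.
    have hm := hdmin j hj.
    rewrite ltnNge; apply/negP => hle.
    have hb0 : (d j - m <= a)%N by lia.
    have e := IH' _ hb0.
    have e2 : d (d j - m)%N = d j by apply: val_inj; rewrite /= e; lia.
    have hb1 : (d j - m < k)%N by lia.
    have := hdinj _ _ hb1 hj e2.
    lia.
  have hP := fresh (k - 1)%N (ltac:(lia)) (ltac:(lia)).
  have hD := fresh (a + 1)%N (ltac:(lia)) (ltac:(lia)).
  have h1 := H (d (k - 1)%N); rewrite hdsl in h1.
  have h2 := H (d a); rewrite hds in h2; last by lia.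
  have eda := IH' a (leqnn a).
  have m1 := mono hx (d a) (d (k - 1)%N) (ltac:(lia)).
  have m2 := mono hy (d 0%N) (d (a + 1)%N) (ltac:(lia)).
  lia.
have key' : forall a, (a < k)%N -> (d a : nat) = (m + a)%N.
  by move=> a ha; exact: key ha a (leqnn a).
have hPk := key' (k - 1)%N (ltac:(lia)).
have lower : forall a, (a < k)%N -> y (d 0%N) - (a:nat)%:Z <= x (d a).
  move=> a ha.
  have h1 := H (d (k - 1)%N); rewrite hdsl in h1.
  have eda := key' a ha.
  have m1 := mono hx (d a) (d (k - 1)%N) (ltac:(lia)).
  lia.
have upper : forall a, (a + 1 < k)%N -> x (d a) <= y (d 0%N) - (a:nat)%:Z.
  move=> a ha.
  have h2 := H (d a); rewrite hds in h2; last by lia.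
  have eda := key' a (ltac:(lia)).
  have eda1 := key' (a + 1)%N ha.
  have m2 := mono hy (d 0%N) (d (a + 1)%N) (ltac:(lia)).
  lia.
have xv : forall a, (a < k)%N -> x (d a) = y (d 0%N) - (a:nat)%:Z.
  move=> a ha.
  have hl := lower a ha.
  case: (ltnP (a + 1) k) => [ha1|ha1].
    have := upper a ha1; lia.
  have -> : a = (k - 1)%N by lia.
  have hu := upper (k - 2)%N (ltac:(lia)).
  have e1 := key' (k - 2)%N (ltac:(lia)).
  have m1 := mono hx (d (k - 2)%N) (d (k - 1)%N) (ltac:(lia)).
  have hl' := lower (k - 1)%N (ltac:(lia)).
  lia.
have yv : forall a, (a < k)%N -> y (d a) = y (d 0%N) - (a:nat)%:Z.
  move=> a ha.
  have eda := key' a ha.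
  have m2 := mono hy (d 0%N) (d a) (ltac:(lia)).
  case: (posnP a) => [->|hapos]; first lia.
  have h2 := H (d (a - 1)%N); rewrite hds in h2; last by lia.
  rewrite (_ : (a - 1 + 1 = a)%N) in h2; last by lia.
  have := xv (a - 1)%N (ltac:(lia)).
  lia.
have fin : (forall j, (j < k)%N -> (d j : nat) = (d 0%N : nat) + j)%N /\
       y (d 0%N) = x (d 0%N) /\
       (forall j, (0 < j)%N -> (j < k)%N ->
          x (d j) = x (d 0%N) - (j : nat)%:Z /\
          y (d j) = x (d 0%N) - (j : nat)%:Z).
  have x0 := xv 0%N k0.
  split; first by move=> j hj; rewrite key' // hd0.
  split; first lia.
  move=> j _ hj; have := xv j hj; have := yv j hj; lia.
exact: fin.
Qed.

Theorem lemma4 (R : realFieldType) (p : R) (hp0 : 0 < p) (hp1 : p < 1)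
  (N : nat) (hN : (1 <= N)%N) (s : 'S_N) (x y : 'I_N -> int)
  (hx : forall i j : 'I_N, (i < j)%N -> x j < x i)
  (hy : forall i j : 'I_N, (i < j)%N -> y j < y i) :
  (* (1) t = 0 *)
  (Fsigma p s x y 0 != 0 -> s = 1%g /\ (forall i, x i = y i))
  /\
  (* (2) t = 1, cycle (c 0, ..., c (k-1)) of s with k > 1 elements *)
  (forall (k : nat) (c : nat -> 'I_N),
     (1 < k)%N ->
     (forall j1 j2, (j1 < k)%N -> (j2 < k)%N -> c j1 = c j2 -> j1 = j2) ->
     (forall j, (j < k)%N -> s (c j) = c ((j + 1) %% k)%N) ->
     Fsigma p s x y 1 != 0 ->
     exists r : nat, (r < k)%N /\
       let d := fun j : nat => c ((j + r) %% k)%N in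
       (forall j, (j < k)%N -> (d j : nat) = (d 0%N : nat) + j)%N /\
       y (d 0%N) = x (d 0%N) /\
       (forall j, (0 < j)%N -> (j < k)%N ->
          x (d j) = x (d 0%N) - (j : nat)%:Z /\
          y (d j) = x (d 0%N) - (j : nat)%:Z)).
Proof.
have fac : forall tt : int, Fsigma p s x y tt != 0 -> forall i,
   F p ((s i : nat)%:Z - (i : nat)%:Z) (x i - y (s i)) tt != 0.
  by move=> tt /prodf_neq0 Hp i; exact: Hp i isT.
split.
  move=> /fac Hf; apply: part1 hx hy _ => i; exact: F0_nz (Hf i).
move=> k c hk hinj hcyc /fac Hf.
apply: part2 hx hy _ k c hk hinj hcyc => i; exact: F1_nz (Hf i).
Qed.
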